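(* Let $L>0$. Let $\Gamma_L$ be the loop of length $L$ with a distinguished point $v$ (made into a vertex of degree two), and let $\Gamma_I$ be the interval $[0,L]$ with distinguished vertex $m$ at its midpoint $L/2$ (made into a vertex of degree two; the endpoints are degree-one vertices with Neumann condition). Then the $M$-functions $M^{\Gamma_L}_v$ and $M^{\Gamma_I}_m$ coincide, although $\Gamma_L$ and $\Gamma_I$ are not isospectral. Consequently, for every $c>0$, if $\Gamma_c$ is an interval of length $c$ attached by one endpoint at $v$ (resp. at $m$), the graphs $\Gamma_L\cup\Gamma_c$ and $\Gamma_I\cup\Gamma_c$ have the same eigenfrequencies apart from those whose eigenfunctions vanish at the attachment vertex; for $L=4$ their secular equations are $\left(-1+e^{4ik}\right)F_c(k)$ and $\left(1+e^{4ik}\right)F_c(k)$ respectively with the common factor $F_c(k)=-e^{2ick}+3e^{2i(c+2)k}+e^{4ik}-3$.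
   Context: Titchmarsh–Weil $M$-function: for a compact metric graph $\Gamma$ with a distinguished boundary vertex $v$ (all other vertices interior), and $k$ outside a discrete set, let $u$ satisfy $-u''=k^2u$ on each edge, be continuous at every vertex, satisfy the Kirchhoff condition (vanishing sum of outward normal derivatives) at every interior vertex, and have $u(v)\ne0$. Then $M^\Gamma_v(k)$ is defined by $M^\Gamma_v(k)u(v)=u'(v)$, where $u'(v)$ is the sum of outward normal derivatives of $u$ at $v$. Standard (Neumann–Kirchhoff) vertex conditions are used throughout. *)

(* Defs.v *)
From Stdlib Require Import Reals List Arith.
From Coquelicot Require Import Coquelicot.

(* A compact metric graph: vertices 0..nV-1, edges 0..nE-1.  Edge e is
   identified with the interval [0, elen e]; the point 0 sits at vertex
   esrc e and the point elen e at vertex etgt e (esrc e = etgt e is a loop). *)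
Record mgraph := MGraph {
  nV : nat; nE : nat;
  elen : nat -> R; esrc : nat -> nat; etgt : nat -> nat }.

(* A function on the graph: one C-valued function per edge, together with
   its derivative (the pair (u, du)). *)
Definition gfun := ((nat -> R -> C) * (nat -> R -> C))%type.

(* -u'' = z u on every edge (the edge solution is taken on all of R; any
   solution on [0, elen e] extends uniquely, so this is no restriction). *)
Definition solves (G : mgraph) (z : C) (f : gfun) : Prop :=
  forall e, (e < nE G)%nat -> forall x : R,
    is_derive (fst f e) x (snd f e x) /\
    is_derive (snd f e) x (Copp (Cmult z (fst f e x))).

Definition vertex_value (G : mgraph) (f : gfun) (w : nat) (a : C) : Prop :=
  forall e, (e < nE G)%nat ->
    (esrc G e = w -> fst f e 0%R = a) /\ (etgt G e = w -> fst f e (elen G e) = a).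

Definition continuous_at_vertex (G : mgraph) (f : gfun) (w : nat) : Prop :=
  exists a, vertex_value G f w a.

Definition Csum (l : list C) : C := fold_right Cplus (RtoC 0) l.

(* Sum at w of the normal derivatives, taken in the direction pointing from
   w into the edges (a loop at w contributes twice). *)
Definition dsum (G : mgraph) (f : gfun) (w : nat) : C :=
  Csum (map (fun e =>
          Cplus (if Nat.eqb (esrc G e) w then snd f e 0%R else RtoC 0)
                (if Nat.eqb (etgt G e) w then Copp (snd f e (elen G e)) else RtoC 0))
        (seq 0 (nE G))).

Definition kirchhoff_at (G : mgraph) (f : gfun) (w : nat) : Prop :=
  continuous_at_vertex G f w /\ dsum G f w = RtoC 0.

Definition gzero (G : mgraph) (f : gfun) : Prop :=
  forall e, (e < nE G)%nat -> forall x, (0 <= x <= elen G e)%R -> fst f e x = RtoC 0.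

(* f is an eigenfunction (possibly zero) of the standard Laplacian for the
   eigenvalue z, i.e. -u'' = z u with standard conditions at all vertices. *)
Definition eigen_sol (G : mgraph) (z : C) (f : gfun) : Prop :=
  solves G z f /\ forall w, (w < nV G)%nat -> kirchhoff_at G f w.

Definition eigenfreq (G : mgraph) (k : R) : Prop :=
  exists f, eigen_sol G (RtoC (k * k)) f /\ ~ gzero G f.

Definition eigenfreq_nonvanishing_at (G : mgraph) (k : R) (w : nat) : Prop :=
  exists f a, eigen_sol G (RtoC (k * k)) f /\ vertex_value G f w a /\ a <> RtoC 0.

Definition lin_indep (G : mgraph) (fs : list gfun) : Prop :=
  forall cs : list C, length cs = length fs ->
    (forall e, (e < nE G)%nat -> forall x, (0 <= x <= elen G e)%R ->
       Csum (map (fun p => Cmult (fst p) (fst (snd p) e x)) (combine cs fs)) = RtoC 0) ->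
    List.Forall (fun c => c = RtoC 0) cs.

Definition mult_ge (G : mgraph) (lam : R) (n : nat) : Prop :=
  exists fs : list gfun, length fs = n /\
    List.Forall (eigen_sol G (RtoC lam)) fs /\ lin_indep G fs.

Definition isospectral (G1 G2 : mgraph) : Prop :=
  forall (lam : R) (n : nat), mult_ge G1 lam n <-> mult_ge G2 lam n.

(* Titchmarsh-Weil M-function with boundary vertex v, as a relation:
   Mfun G v k m  <->  M^G_v(k) is defined and equals m. *)
Definition admissible (G : mgraph) (v : nat) (k : C) (f : gfun) : Prop :=
  solves G (Cmult k k) f /\
  (forall w, (w < nV G)%nat -> continuous_at_vertex G f w) /\
  (forall w, (w < nV G)%nat -> w <> v -> dsum G f w = RtoC 0).

Definition Mfun (G : mgraph) (v : nat) (k m : C) : Prop :=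
  (exists f a, admissible G v k f /\ vertex_value G f v a /\ a <> RtoC 0) /\
  (forall f a, admissible G v k f -> vertex_value G f v a -> a <> RtoC 0 ->
     dsum G f v = Cmult m a).

(* The loop of length L with its point v = vertex 0. *)
Definition loop_graph (L : R) : mgraph :=
  MGraph 1 1 (fun _ => L) (fun _ => 0%nat) (fun _ => 0%nat).

(* The interval [0, L] with midpoint m = vertex 0 made into a vertex; the
   two halves (edges 0 and 1, length L/2) go from m to the endpoints
   (vertices 1 and 2). *)
Definition interval_graph (L : R) : mgraph :=
  MGraph 3 2 (fun _ => (L / 2)%R) (fun _ => 0%nat) (fun e => S e).

Definition attach (G : mgraph) (w : nat) (c : R) : mgraph :=
  MGraph (S (nV G)) (S (nE G))
    (fun e => if Nat.eqb e (nE G) then c else elen G e)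
    (fun e => if Nat.eqb e (nE G) then w else esrc G e)
    (fun e => if Nat.eqb e (nE G) then nV G else etgt G e).

Definition cexpi (t : R) : C := (cos t, sin t).

Definition Fc (c k : R) : C :=
  Cplus (Cplus (Cplus (Copp (cexpi (2 * c * k)))
                      (Cmult (RtoC 3) (cexpi (2 * (c + 2) * k))))
               (cexpi (4 * k)))
        (Copp (RtoC 3)).

(* Main.v *)
Require Import Defs.
From Stdlib Require Import Reals List Arith.
From Coquelicot Require Import Coquelicot.
From Stdlib Require Import Lra Lia ZArith.
Open Scope R_scope.

Lemma isd_val {K : AbsRing} {V : NormedModule K} (f : K -> V) x l l' :
  is_derive f x l -> l = l' -> is_derive f x l'.
Proof. intros H ->; exact H. Qed.

Lemma isd_fst (f : R -> C) x l :
  is_derive f x l -> is_derive (fun t => fst (f t)) x (fst l).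
Proof.
  intros H. unfold is_derive in *.
  pose proof (@filterdiff_comp R_AbsRing R_NormedModule
     (prod_NormedModule R_AbsRing R_NormedModule R_NormedModule) R_NormedModule
     (locally x) _ f (fun p => fst p) _ (fun p => fst p) H
     (filterdiff_linear _ is_linear_fst)) as H2.
  apply (filterdiff_ext_lin _ _ _ H2). intros; reflexivity.
Qed.
Lemma isd_snd (f : R -> C) x l :
  is_derive f x l -> is_derive (fun t => snd (f t)) x (snd l).
Proof.
  intros H. unfold is_derive in *.
  pose proof (@filterdiff_comp R_AbsRing R_NormedModule
     (prod_NormedModule R_AbsRing R_NormedModule R_NormedModule) R_NormedModule
     (locally x) _ f (fun p => snd p) _ (fun p => snd p) H
     (filterdiff_linear _ is_linear_snd)) as H2.
  apply (filterdiff_ext_lin _ _ _ H2). intros; reflexivity.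
Qed.
Lemma isd_pair (f g : R -> R) x a b :
  is_derive f x a -> is_derive g x b -> is_derive (fun t => (f t, g t) : C) x (a, b).
Proof.
  intros Hf Hg.
  pose proof (is_derive_scal_l (V := C_R_NormedModule) f x a (1,0) Hf) as H1.
  pose proof (is_derive_scal_l (V := C_R_NormedModule) g x b (0,1) Hg) as H2.
  pose proof (is_derive_plus _ _ _ _ _ H1 H2) as H3.
  eapply is_derive_ext; [| eapply (isd_val _ _ _ _ H3)].
  - intros t. simpl. unfold plus, scal; simpl. unfold prod_plus, prod_scal; simpl.
    unfold plus, scal; simpl. unfold mult; simpl. f_equal; ring.
  - simpl. unfold plus, scal; simpl. unfold prod_plus, prod_scal; simpl.
    unfold plus, scal; simpl. unfold mult; simpl. f_equal; ring.
Qed.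


Definition sol (z : C) (u du : R -> C) : Prop :=
  forall x, is_derive u x (du x) /\ is_derive du x (Copp (Cmult z (u x))).

Lemma dsq (f : R -> R) x l : derivable_pt_lim f x l ->
  derivable_pt_lim (fun t => f t * f t) x (2 * f x * l).
Proof.
  intros H. pose proof (derivable_pt_lim_mult f f x l l H H) as H2.
  replace (2 * f x * l) with (l * f x + f x * l) by ring. exact H2.
Qed.

Lemma ode_zero z u du x0 : sol z u du -> u x0 = RtoC 0 -> du x0 = RtoC 0 ->
  forall x, u x = RtoC 0 /\ du x = RtoC 0.
Proof.
  intros Hs H0 H1.
  set (a := fun t => fst (u t)). set (b := fun t => snd (u t)).
  set (c := fun t => fst (du t)). set (d := fun t => snd (du t)).
  destruct z as [zr zi].
  assert (Da : forall t, derivable_pt_lim a t (c t)).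
  { intros t; apply is_derive_Reals; apply (isd_fst u t), Hs. }
  assert (Db : forall t, derivable_pt_lim b t (d t)).
  { intros t; apply is_derive_Reals; apply (isd_snd u t), Hs. }
  assert (Dc : forall t, derivable_pt_lim c t (- (zr * a t - zi * b t))).
  { intros t; apply is_derive_Reals. pose proof (isd_fst du t _ (proj2 (Hs t))) as H.
    unfold a, b. destruct (u t) as [p q]. simpl in *. exact H. }
  assert (Dd : forall t, derivable_pt_lim d t (- (zr * b t + zi * a t))).
  { intros t; apply is_derive_Reals. pose proof (isd_snd du t _ (proj2 (Hs t))) as H.
    unfold a, b. destruct (u t) as [p q]. simpl in *.
    exact H. }
  set (E := fun t => a t * a t + b t * b t + c t * c t + d t * d t).
  set (E' := fun t => 2 * a t * c t + 2 * b t * d t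
                    + 2 * c t * (- (zr * a t - zi * b t)) + 2 * d t * (- (zr * b t + zi * a t))).
  assert (DE : forall t, derivable_pt_lim E t (E' t)).
  { intros t. unfold E, E'.
    apply derivable_pt_lim_plus; [apply derivable_pt_lim_plus; [apply derivable_pt_lim_plus|]|];
    apply dsq; auto. }
  set (K := 4 + 2 * zr * zr + 2 * zi * zi).
  assert (Kp : 0 < K) by (unfold K; nra).
  assert (EB : forall t, Rabs (E' t) <= K * E t).
  { intros t. unfold E, E', K.
    set (p := a t); set (q := b t); set (r := c t); set (s := d t).
    apply Rabs_le. split.
    - pose proof (pow2_ge_0 (p + r)); pose proof (pow2_ge_0 (q + s));
      pose proof (pow2_ge_0 (zr * r - p)); pose proof (pow2_ge_0 (zi * r + q));
      pose proof (pow2_ge_0 (zr * s - q)); pose proof (pow2_ge_0 (zi * s - p));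
      pose proof (pow2_ge_0 (zr * p)); pose proof (pow2_ge_0 (zr * q));
      pose proof (pow2_ge_0 (zi * p)); pose proof (pow2_ge_0 (zi * q));
      pose proof (pow2_ge_0 p); pose proof (pow2_ge_0 q);
      pose proof (pow2_ge_0 r); pose proof (pow2_ge_0 s);
      pose proof (pow2_ge_0 (zr * r)); pose proof (pow2_ge_0 (zr * s));
      pose proof (pow2_ge_0 (zi * r)); pose proof (pow2_ge_0 (zi * s)).
      simpl in *. nra.
    - pose proof (pow2_ge_0 (p - r)); pose proof (pow2_ge_0 (q - s));
      pose proof (pow2_ge_0 (zr * r + p)); pose proof (pow2_ge_0 (zi * r - q));
      pose proof (pow2_ge_0 (zr * s + q)); pose proof (pow2_ge_0 (zi * s + p));
      pose proof (pow2_ge_0 (zr * p)); pose proof (pow2_ge_0 (zr * q));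
      pose proof (pow2_ge_0 (zi * p)); pose proof (pow2_ge_0 (zi * q));
      pose proof (pow2_ge_0 p); pose proof (pow2_ge_0 q);
      pose proof (pow2_ge_0 r); pose proof (pow2_ge_0 s);
      pose proof (pow2_ge_0 (zr * r)); pose proof (pow2_ge_0 (zr * s));
      pose proof (pow2_ge_0 (zi * r)); pose proof (pow2_ge_0 (zi * s)).
      simpl in *. nra. }
  assert (Ege : forall t, 0 <= E t) by (intros t; unfold E; nra).
  assert (E0 : E x0 = 0).
  { unfold E, a, b, c, d. rewrite H0, H1. simpl. ring. }
  assert (Ez : forall t, E t = 0).
  { intros t. destruct (Rle_or_lt x0 t) as [Ht|Ht].
    - set (g := fun t => E t * exp (- K * t)).
      assert (Dg : forall y, is_derive g y ((E' y - K * E y) * exp (- K * y))).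
      { intros y. apply is_derive_Reals. unfold g.
        replace ((E' y - K * E y) * exp (- K * y)) with
          (E' y * exp (- K * y) + E y * (exp (- K * y) * (- K * 1))) by ring.
        apply (derivable_pt_lim_mult E (fun t => exp (- K * t))); [apply DE|].
        apply is_derive_Reals. auto_derive; [exact I| ring]. }
      destruct (MVT_cor4 g _ x0 (Rabs (t - x0)) (fun y _ => Dg y) t (Rle_refl _)) as [cc [Hc _]].
      assert (Hg0 : g x0 = 0) by (unfold g; rewrite E0; ring).
      assert (Hd0 : (E' cc - K * E cc) * exp (- K * cc) <= 0).
      { pose proof (exp_pos (- K * cc)). pose proof (EB cc) as HH. apply Rabs_le_between in HH.
        nra. }
      assert (Hgt : g t <= 0) by nra.
      unfold g in Hgt. pose proof (exp_pos (- K * t)). pose proof (Ege t). nra.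
    - set (g := fun t => E t * exp (K * t)).
      assert (Dg : forall y, is_derive g y ((E' y + K * E y) * exp (K * y))).
      { intros y. apply is_derive_Reals. unfold g.
        replace ((E' y + K * E y) * exp (K * y)) with
          (E' y * exp (K * y) + E y * (exp (K * y) * (K * 1))) by ring.
        apply (derivable_pt_lim_mult E (fun t => exp (K * t))); [apply DE|].
        apply is_derive_Reals. auto_derive; [exact I| ring]. }
      destruct (MVT_cor4 g _ x0 (Rabs (t - x0)) (fun y _ => Dg y) t (Rle_refl _)) as [cc [Hc _]].
      assert (Hg0 : g x0 = 0) by (unfold g; rewrite E0; ring).
      assert (Hd0 : 0 <= (E' cc + K * E cc) * exp (K * cc)).
      { pose proof (exp_pos (K * cc)). pose proof (EB cc) as HH. apply Rabs_le_between in HH.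
        nra. }
      assert (Hgt : g t <= 0) by nra.
      unfold g in Hgt. pose proof (exp_pos (K * t)). pose proof (Ege t). nra. }
  intros t. pose proof (Ez t) as Et. unfold E in Et.
  assert (a t = 0 /\ b t = 0 /\ c t = 0 /\ d t = 0) as (Ha & Hb & Hc & Hd) by (repeat split; nra).
  unfold a, b, c, d in *. split.
  - destruct (u t); simpl in *; subst; reflexivity.
  - destruct (du t); simpl in *; subst; reflexivity.
Qed.


Lemma isd_C_intro (f : R -> C) x l :
  is_derive (fun t => fst (f t)) x (fst l) -> is_derive (fun t => snd (f t)) x (snd l) ->
  is_derive f x l.
Proof.
  intros H1 H2. pose proof (isd_pair _ _ _ _ _ H1 H2) as H.
  eapply is_derive_ext; [|eapply isd_val; [exact H|]].
  - intros t; simpl; destruct (f t); reflexivity.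
  - destruct l; reflexivity.
Qed.

Lemma dR_plus (f g : R -> R) x a b :
  is_derive f x a -> is_derive g x b -> is_derive (fun t => f t + g t) x (a + b).
Proof. intros; apply (is_derive_plus f g); auto. Qed.
Lemma dR_minus (f g : R -> R) x a b :
  is_derive f x a -> is_derive g x b -> is_derive (fun t => f t - g t) x (a - b).
Proof. intros; apply (is_derive_minus f g); auto. Qed.
Lemma dR_scal (f : R -> R) x a k :
  is_derive f x a -> is_derive (fun t => k * f t) x (k * a).
Proof. intros; apply is_derive_scal; auto. Qed.

Lemma isd_lin (f g : R -> C) (al be : C) x a b :
  is_derive f x a -> is_derive g x b ->
  is_derive (fun t => Cplus (Cmult al (f t)) (Cmult be (g t))) x (Cplus (Cmult al a) (Cmult be b)).
Proof.
  intros Hf Hg. destruct al as [p q], be as [r s].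
  pose proof (isd_fst _ _ _ Hf) as F1. pose proof (isd_snd _ _ _ Hf) as F2.
  pose proof (isd_fst _ _ _ Hg) as G1. pose proof (isd_snd _ _ _ Hg) as G2.
  apply isd_C_intro; simpl.
  - apply dR_plus; apply dR_minus; apply dR_scal; assumption.
  - apply dR_plus; apply dR_plus; apply dR_scal; assumption.
Qed.

Lemma isd_refl (f df : R -> C) a x :
  (forall y, is_derive f y (df y)) ->
  is_derive (fun t => f (a - t)) x (Copp (df (a - x))).
Proof.
  intros H. pose proof (H (a - x)) as Hx.
  pose proof (isd_fst _ _ _ Hx) as F1. pose proof (isd_snd _ _ _ Hx) as F2.
  apply isd_C_intro; simpl.
  - eapply isd_val. apply (is_derive_comp (fun y => fst (f y)) (fun t => a - t)). exact F1.
    auto_derive; [exact I|reflexivity]. change (- (1) * fst (df (a - x)) = - fst (df (a - x))); ring.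
  - eapply isd_val. apply (is_derive_comp (fun y => snd (f y)) (fun t => a - t)). exact F2.
    auto_derive; [exact I|reflexivity]. change (- (1) * snd (df (a - x)) = - snd (df (a - x))); ring.
Qed.

Lemma sol_lin z u1 du1 u2 du2 al be :
  sol z u1 du1 -> sol z u2 du2 ->
  sol z (fun t => Cplus (Cmult al (u1 t)) (Cmult be (u2 t)))
        (fun t => Cplus (Cmult al (du1 t)) (Cmult be (du2 t))).
Proof.
  intros H1 H2 x. split.
  - apply isd_lin; [apply H1|apply H2].
  - eapply isd_val. apply isd_lin; [apply H1|apply H2].
    destruct z, al, be, (u1 x), (u2 x). apply injective_projections; simpl; ring.
Qed.

Lemma sol_refl z u du a :
  sol z u du -> sol z (fun t => u (a - t)) (fun t => Copp (du (a - t))).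
Proof.
  intros H x. split.
  - apply isd_refl. intros y; apply H.
  - assert (Hd : is_derive (fun t => du (a - t)) x (Copp (Copp (Cmult z (u (a - x)))))).
    { apply (isd_refl du (fun t => Copp (Cmult z (u t)))). intros y; apply H. }
    pose proof (isd_lin _ _ (RtoC (-1)) (RtoC 0) x _ _ Hd Hd) as H2.
    eapply is_derive_ext; [|eapply isd_val; [exact H2|]].
    + intros t; simpl. apply injective_projections; simpl; ring.
    + apply injective_projections; simpl; ring.
Qed.

Lemma sol_eq z u1 du1 u2 du2 x0 :
  sol z u1 du1 -> sol z u2 du2 -> u1 x0 = u2 x0 -> du1 x0 = du2 x0 ->
  forall x, u1 x = u2 x /\ du1 x = du2 x.
Proof.
  intros H1 H2 E1 E2 x.
  pose proof (sol_lin _ _ _ _ _ (RtoC 1) (RtoC (-1)) H1 H2) as H.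
  assert (Z1 : Cplus (Cmult (RtoC 1) (u1 x0)) (Cmult (RtoC (-1)) (u2 x0)) = RtoC 0).
  { rewrite E1. apply injective_projections; simpl; ring. }
  assert (Z2 : Cplus (Cmult (RtoC 1) (du1 x0)) (Cmult (RtoC (-1)) (du2 x0)) = RtoC 0).
  { rewrite E2. apply injective_projections; simpl; ring. }
  destruct (ode_zero _ _ _ x0 H Z1 Z2 x) as [A B]. split.
  - revert A. destruct (u1 x), (u2 x). simpl. intros Hq.
    injection Hq; intros; apply injective_projections; simpl; lra.
  - revert B. destruct (du1 x), (du2 x). simpl. intros Hq.
    injection Hq; intros; apply injective_projections; simpl; lra.
Qed.

Definition cs (k x1 : R) (A B : C) (x : R) : C :=
  Cplus (Cmult A (RtoC (cos (k * (x - x1))))) (Cmult B (RtoC (sin (k * (x - x1))))).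
Definition dcs (k x1 : R) (A B : C) (x : R) : C :=
  Cplus (Cmult A (RtoC (- k * sin (k * (x - x1))))) (Cmult B (RtoC (k * cos (k * (x - x1))))).

Lemma isd_RtoC (f : R -> R) x a : is_derive f x a -> is_derive (fun t => RtoC (f t)) x (RtoC a).
Proof.
  intros H. apply isd_C_intro; simpl. exact H. auto_derive; auto.
Qed.

Lemma sol_cs k x1 A B : sol (RtoC (k * k)) (cs k x1 A B) (dcs k x1 A B).
Proof.
  intros x. unfold cs, dcs. split.
  - apply isd_lin; apply isd_RtoC; auto_derive; auto; unfold Rminus; ring.
  - eapply isd_val. apply isd_lin; apply isd_RtoC; auto_derive; auto.
    destruct A, B. apply injective_projections; simpl; unfold Rminus; ring.
Qed.

Lemma rep k x1 u du : k <> 0 -> sol (RtoC (k * k)) u du ->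
  forall x, u x = cs k x1 (u x1) (Cmult (du x1) (RtoC (/ k))) x /\
            du x = dcs k x1 (u x1) (Cmult (du x1) (RtoC (/ k))) x.
Proof.
  intros Hk Hs. apply (sol_eq _ _ _ _ _ x1 Hs (sol_cs _ _ _ _)).
  - unfold cs. rewrite Rminus_eq_0, Rmult_0_r, cos_0, sin_0.
    apply injective_projections; simpl; ring.
  - unfold dcs. rewrite Rminus_eq_0, Rmult_0_r, cos_0, sin_0.
    destruct (du x1). apply injective_projections; simpl; field; auto.
Qed.


Definition half : C := RtoC (/2).
Definition symw (L : R) (u : R -> C) t := Cplus (Cmult half (u t)) (Cmult half (u (L - t))).
Definition symdw (L : R) (du : R -> C) t := Cplus (Cmult half (du t)) (Cmult half (Copp (du (L - t)))).
Definition avg (g0 g1 : R -> C) t := Cplus (Cmult half (g0 t)) (Cmult half (g1 t)).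

Lemma loop_to_int z L u du a : sol z u du -> u 0 = a -> u L = a ->
  sol z (symw L u) (symdw L du) /\ symw L u 0 = a /\ symdw L du (L/2) = RtoC 0 /\
  Cplus (symdw L du 0) (symdw L du 0) = Cplus (du 0) (Copp (du L)).
Proof.
  intros H H0 HL. split; [|split; [|split]].
  - apply (sol_lin z u du (fun t => u (L - t)) (fun t => Copp (du (L - t)))); auto.
    apply sol_refl; auto.
  - unfold symw. rewrite Rminus_0_r, H0, HL. destruct a; apply injective_projections; simpl; field.
  - unfold symdw. replace (L - L/2) with (L/2) by field. destruct (du (L/2)).
    apply injective_projections; simpl; field.
  - unfold symdw. rewrite Rminus_0_r. destruct (du 0), (du L).
    apply injective_projections; simpl; field.
Qed.

Lemma refl_sym z L g dg : sol z g dg -> dg (L/2) = RtoC 0 ->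
  forall t, g (L - t) = g t /\ Copp (dg (L - t)) = dg t.
Proof.
  intros H H2 t.
  apply (sol_eq z _ _ _ _ (L/2) (sol_refl z g dg L H) H).
  - f_equal; field.
  - replace (L - L/2) with (L/2) by field. rewrite H2. apply injective_projections; simpl; ring.
Qed.

Lemma int_to_loop z L g0 dg0 g1 dg1 a : sol z g0 dg0 -> sol z g1 dg1 ->
  g0 0 = a -> g1 0 = a -> dg0 (L/2) = RtoC 0 -> dg1 (L/2) = RtoC 0 ->
  sol z (avg g0 g1) (avg dg0 dg1) /\ avg g0 g1 0 = a /\ avg g0 g1 L = a /\
  Cplus (avg dg0 dg1 0) (Copp (avg dg0 dg1 L)) = Cplus (dg0 0) (dg1 0).
Proof.
  intros S0 S1 E0 E1 D0 D1.
  destruct (refl_sym z L g0 dg0 S0 D0 0) as [R0 R0'].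
  destruct (refl_sym z L g1 dg1 S1 D1 0) as [R1 R1'].
  rewrite Rminus_0_r in R0, R0', R1, R1'.
  split; [|split; [|split]].
  - apply sol_lin; auto.
  - unfold avg. rewrite E0, E1. destruct a; apply injective_projections; simpl; field.
  - unfold avg. rewrite R0, R1, E0, E1. destruct a; apply injective_projections; simpl; field.
  - unfold avg. rewrite <- R0', <- R1'. destruct (dg0 L), (dg1 L).
    apply injective_projections; simpl; field.
Qed.


Lemma Cplus0r (x : C) : Cplus x (RtoC 0) = x.
Proof. destruct x; apply injective_projections; simpl; ring. Qed.
Lemma Cplus0l (x : C) : Cplus (RtoC 0) x = x.
Proof. destruct x; apply injective_projections; simpl; ring. Qed.

Lemma loop_av L k f a :
  (admissible (loop_graph L) 0 k f /\ vertex_value (loop_graph L) f 0 a) <->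
  (sol (Cmult k k) (fst f 0%nat) (snd f 0%nat) /\ fst f 0%nat 0 = a /\ fst f 0%nat L = a).
Proof.
  split.
  - intros [[Hs _] Hv]. split.
    + intros x. apply (Hs 0%nat). simpl; lia.
    + destruct (Hv 0%nat) as [H1 H2]; [simpl; lia|]. simpl in *. auto.
  - intros [Hs [H0 HL]]. split; [split; [|split]|].
    + intros e He x. simpl in He. assert (e = 0%nat) by lia. subst e. apply Hs.
    + intros w Hw. simpl in Hw. assert (w = 0%nat) by lia. subst w. exists a.
      intros e He. simpl in He. assert (e = 0%nat) by lia. subst e. simpl. auto.
    + intros w Hw Hne. simpl in Hw. lia.
    + intros e He. simpl in He. assert (e = 0%nat) by lia. subst e. simpl. auto.
Qed.

Lemma loop_dsum L f : dsum (loop_graph L) f 0 = Cplus (snd f 0%nat 0) (Copp (snd f 0%nat L)).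
Proof. unfold dsum, Csum. simpl. apply Cplus0r. Qed.

Lemma int_av L k f a :
  (admissible (interval_graph L) 0 k f /\ vertex_value (interval_graph L) f 0 a) <->
  (sol (Cmult k k) (fst f 0%nat) (snd f 0%nat) /\ sol (Cmult k k) (fst f 1%nat) (snd f 1%nat) /\
   fst f 0%nat 0 = a /\ fst f 1%nat 0 = a /\
   snd f 0%nat (L/2) = RtoC 0 /\ snd f 1%nat (L/2) = RtoC 0).
Proof.
  split.
  - intros [[Hs [_ Hk]] Hv]. split; [|split; [|split; [|split; [|split]]]].
    + intros x. apply (Hs 0%nat). simpl; lia.
    + intros x. apply (Hs 1%nat). simpl; lia.
    + destruct (Hv 0%nat) as [H1 H2]; [simpl; lia|]. simpl in *. auto.
    + destruct (Hv 1%nat) as [H1 H2]; [simpl; lia|]. simpl in *. auto.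
    + pose proof (Hk 1%nat ltac:(simpl; lia) ltac:(lia)) as H.
      unfold dsum, Csum in H. simpl in H. revert H. destruct (snd f 0%nat (L/2)).
      intros H; injection H; intros; apply injective_projections; simpl; lra.
    + pose proof (Hk 2%nat ltac:(simpl; lia) ltac:(lia)) as H.
      unfold dsum, Csum in H. simpl in H. revert H. destruct (snd f 1%nat (L/2)).
      intros H; injection H; intros; apply injective_projections; simpl; lra.
  - intros [S0 [S1 [E0 [E1 [D0 D1]]]]]. split; [split; [|split]|].
    + intros e He x. simpl in He. destruct e as [|[|]]; [apply S0|apply S1|lia].
    + intros w Hw. simpl in Hw. destruct w as [|[|[|]]]; [exists a| exists (fst f 0%nat (L/2)) | exists (fst f 1%nat (L/2)) | lia];
      intros e He; simpl in He; (destruct e as [|[|]]; [| |lia]); simpl; split; intros Hq; try discriminate; auto.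
    + intros w Hw Hne. simpl in Hw. unfold dsum, Csum. simpl.
      destruct w as [|[|[|]]]; [lia| | |lia]; simpl.
      * rewrite D0. apply injective_projections; simpl; ring.
      * rewrite D1. apply injective_projections; simpl; ring.
    + intros e He. simpl in He. destruct e as [|[|]]; [| |lia]; simpl; split; intros Hq; try discriminate; auto.
Qed.

Lemma int_dsum L f : dsum (interval_graph L) f 0 = Cplus (snd f 0%nat 0) (snd f 1%nat 0).
Proof. unfold dsum, Csum. simpl. destruct (snd f 0%nat 0), (snd f 1%nat 0).
  apply injective_projections; simpl; ring. Qed.

Lemma part1 L (HL : 0 < L) : forall k m : C, Mfun (loop_graph L) 0 k m <-> Mfun (interval_graph L) 0 k m.
Proof.
  intros k m. unfold Mfun. split.
  - intros [[f0 [a0 [Hf0 [Hv0 Ha0]]]] HU]. split.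
    + rename f0 into f, a0 into a, Hf0 into Hf, Hv0 into Hv, Ha0 into Ha.
      destruct (proj1 (loop_av L k f a) (conj Hf Hv)) as [S [E0 EL]].
      destruct (loop_to_int _ L _ _ a S E0 EL) as [S' [W0 [DW DD]]].
      exists (fun _ => symw L (fst f 0%nat), fun _ => symdw L (snd f 0%nat)), a.
      assert (Hg : admissible (interval_graph L) 0 k (fun _ => symw L (fst f 0%nat), fun _ => symdw L (snd f 0%nat)) /\ vertex_value (interval_graph L) (fun _ => symw L (fst f 0%nat), fun _ => symdw L (snd f 0%nat)) 0 a).
      { apply (proj2 (int_av L k _ a)). cbn [fst snd]. exact (conj S' (conj S' (conj W0 (conj W0 (conj DW DW))))). }
      tauto.
    + intros g a Hg Hv Ha.
      destruct (proj1 (int_av L k g a) (conj Hg Hv)) as [S0 [S1 [E0 [E1 [D0 D1]]]]].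
      destruct (int_to_loop _ L _ _ _ _ a S0 S1 E0 E1 D0 D1) as [S [U0 [UL UD]]].
      set (f := (fun _ : nat => avg (fst g 0%nat) (fst g 1%nat), fun _ : nat => avg (snd g 0%nat) (snd g 1%nat)) : gfun).
      assert (Hf : admissible (loop_graph L) 0 k f /\ vertex_value (loop_graph L) f 0 a).
      { apply (proj2 (loop_av L k f a)). cbn [fst snd]. auto. }
      pose proof (HU f a (proj1 Hf) (proj2 Hf) Ha) as Hm.
      rewrite loop_dsum in Hm. simpl in Hm. rewrite int_dsum, <- UD. exact Hm.
  - intros [[g0 [a0 [Hg0 [Hv0 Ha0]]]] HU]. split.
    + rename g0 into g, a0 into a, Hg0 into Hg, Hv0 into Hv, Ha0 into Ha.
      destruct (proj1 (int_av L k g a) (conj Hg Hv)) as [S0 [S1 [E0 [E1 [D0 D1]]]]].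
      destruct (int_to_loop _ L _ _ _ _ a S0 S1 E0 E1 D0 D1) as [S [U0 [UL UD]]].
      exists (fun _ : nat => avg (fst g 0%nat) (fst g 1%nat), fun _ : nat => avg (snd g 0%nat) (snd g 1%nat)), a.
      assert (Hf : admissible (loop_graph L) 0 k (fun _ : nat => avg (fst g 0%nat) (fst g 1%nat), fun _ : nat => avg (snd g 0%nat) (snd g 1%nat)) /\ vertex_value (loop_graph L) (fun _ : nat => avg (fst g 0%nat) (fst g 1%nat), fun _ : nat => avg (snd g 0%nat) (snd g 1%nat)) 0 a).
      { apply (proj2 (loop_av L k _ a)). cbn [fst snd]. auto. }
      tauto.
    + intros f a Hf Hv Ha.
      destruct (proj1 (loop_av L k f a) (conj Hf Hv)) as [S [E0 EL]].
      destruct (loop_to_int _ L _ _ a S E0 EL) as [S' [W0 [DW DD]]].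
      set (g := (fun _ : nat => symw L (fst f 0%nat), fun _ : nat => symdw L (snd f 0%nat)) : gfun).
      assert (Hg : admissible (interval_graph L) 0 k g /\ vertex_value (interval_graph L) g 0 a).
      { apply (proj2 (int_av L k g a)). cbn [fst snd]. exact (conj S' (conj S' (conj W0 (conj W0 (conj DW DW))))). }
      pose proof (HU g a (proj1 Hg) (proj2 Hg) Ha) as Hm.
      rewrite int_dsum in Hm. simpl in Hm. rewrite loop_dsum, <- DD. exact Hm.
Qed.


Lemma cs_eval k x1 A B x : cs k x1 A B x =
  ((fst A * cos (k * (x - x1)) + fst B * sin (k * (x - x1))),
   (snd A * cos (k * (x - x1)) + snd B * sin (k * (x - x1)))).
Proof. destruct A, B; unfold cs; apply injective_projections; simpl; ring. Qed.
Lemma dcs_eval k x1 A B x : dcs k x1 A B x =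
  ((fst A * (- k * sin (k * (x - x1))) + fst B * (k * cos (k * (x - x1)))),
   (snd A * (- k * sin (k * (x - x1))) + snd B * (k * cos (k * (x - x1))))).
Proof. destruct A, B; unfold dcs; apply injective_projections; simpl; ring. Qed.

Lemma int_mult L (HL : 0 < L) : mult_ge (interval_graph L) ((PI / L) * (PI / L)) 1.
Proof.
  set (k := PI / L).
  assert (kL : k * (L / 2 - 0) = PI / 2) by (unfold k; field; lra).
  assert (k0 : k * (0 - 0) = 0) by ring.
  set (f := (fun e : nat => if Nat.eqb e 0 then cs k 0 (RtoC 0) (RtoC 1) else cs k 0 (RtoC 0) (RtoC (-1)),
             fun e : nat => if Nat.eqb e 0 then dcs k 0 (RtoC 0) (RtoC 1) else dcs k 0 (RtoC 0) (RtoC (-1))) : gfun).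
  exists (f :: nil). split; [reflexivity|split].
  - constructor; [|constructor]. split.
    + intros e He x. simpl in He. destruct e as [|[|]]; [| |lia]; simpl; apply sol_cs.
    + intros w Hw. simpl in Hw. split.
      * destruct w as [|[|[|]]]; [exists (RtoC 0)| exists (fst f 0%nat (L/2)) | exists (fst f 1%nat (L/2)) | lia];
        intros e He; simpl in He; (destruct e as [|[|]]; [| |lia]); simpl; split; intros Hq; try discriminate; auto;
        rewrite cs_eval, k0, cos_0, sin_0; apply injective_projections; simpl; ring.
      * unfold dsum, Csum. destruct w as [|[|[|]]]; [| | |lia]; simpl;
        rewrite ?dcs_eval, ?k0, ?kL, ?cos_0, ?sin_0, ?cos_PI2, ?sin_PI2;
        apply injective_projections; simpl; ring.
  - intros cs0 Hl H. destruct cs0 as [|c [|]]; simpl in Hl; try lia.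
    pose proof (H 0%nat ltac:(simpl; lia) (L/2) ltac:(simpl; lra)) as H1.
    simpl in H1. rewrite cs_eval, kL, cos_PI2, sin_PI2 in H1.
    constructor; [|constructor]. destruct c as [p q]. simpl in H1.
    injection H1; intros; apply injective_projections; simpl; lra.
Qed.

Lemma loop_no_mult L (HL : 0 < L) : ~ mult_ge (loop_graph L) ((PI / L) * (PI / L)) 1.
Proof.
  set (k := PI / L).
  assert (kp : 0 < k) by (unfold k; apply Rdiv_lt_0_compat; [apply PI_RGT_0|lra]).
  assert (kL : k * (L - 0) = PI) by (unfold k; field; lra).
  assert (k0 : k * (0 - 0) = 0) by ring.
  intros [fs [Hl [Hall Hind]]]. destruct fs as [|f [|]]; simpl in Hl; try lia.
  inversion Hall as [|? ? [Hs Hk]]; subst.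
  assert (S : sol (RtoC (k * k)) (fst f 0%nat) (snd f 0%nat)).
  { intros x. apply (Hs 0%nat). simpl; lia. }
  destruct (Hk 0%nat ltac:(simpl; lia)) as [[a Hv] Hd].
  destruct (Hv 0%nat ltac:(simpl; lia)) as [V0 VL]. simpl in V0, VL.
  specialize (V0 eq_refl). specialize (VL eq_refl).
  rewrite loop_dsum in Hd.
  pose proof (rep k 0 _ _ ltac:(lra) S) as R.
  set (A := fst f 0%nat 0) in *. set (Bc := Cmult (snd f 0%nat 0) (RtoC (/ k))) in *.
  destruct (R L) as [RL RdL]. destruct (R 0) as [_ Rd0].
  rewrite cs_eval, kL, cos_PI, sin_PI in RL.
  rewrite dcs_eval, kL, cos_PI, sin_PI in RdL.
  rewrite dcs_eval, k0, cos_0, sin_0 in Rd0.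
  assert (HA : A = RtoC 0).
  { assert (HAL : A = fst f 0%nat L) by (rewrite V0, VL; reflexivity).
    rewrite RL in HAL. destruct A as [p q]. simpl in HAL. injection HAL; intros.
    apply injective_projections; simpl; lra. }
  assert (HB : Bc = RtoC 0).
  { rewrite RdL, Rd0 in Hd. destruct A as [p q], Bc as [r s]. simpl in Hd.
    injection Hd; intros. apply injective_projections; simpl; nra. }
  assert (Z : forall x, fst f 0%nat x = RtoC 0).
  { intros x. rewrite (proj1 (R x)). fold A Bc. rewrite HA, HB, cs_eval. simpl.
    apply injective_projections; simpl; ring. }
  specialize (Hind (RtoC 1 :: nil) eq_refl).
  assert (H1 : List.Forall (fun c => c = RtoC 0) (RtoC 1 :: nil)).
  { apply Hind. intros e He x _. simpl in He. assert (e = 0%nat) by lia. subst e.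
    simpl. rewrite Z. apply injective_projections; simpl; ring. }
  inversion H1 as [|? ? Hc]. injection Hc; intros; lra.
Qed.

Lemma part2 L (HL : 0 < L) : ~ isospectral (loop_graph L) (interval_graph L).
Proof.
  intros HI. apply (loop_no_mult L HL). apply (proj2 (HI _ 1%nat)). apply int_mult; auto.
Qed.


Ltac cq := apply injective_projections; simpl; ring.

Lemma copp0 (d : C) : Copp d = RtoC 0 <-> d = RtoC 0.
Proof. destruct d; split; intros H; injection H; intros; apply injective_projections; simpl; lra. Qed.

Lemma G1_eig L c z f :
  eigen_sol (attach (loop_graph L) 0 c) z f <->
  (sol z (fst f 0%nat) (snd f 0%nat) /\ sol z (fst f 1%nat) (snd f 1%nat) /\
   fst f 0%nat 0 = fst f 1%nat 0 /\ fst f 0%nat L = fst f 1%nat 0 /\ snd f 1%nat c = RtoC 0 /\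
   Cplus (Cplus (snd f 0%nat 0) (Copp (snd f 0%nat L))) (snd f 1%nat 0) = RtoC 0).
Proof.
  split.
  - intros [Hs Hk].
    destruct (Hk 0%nat ltac:(simpl; lia)) as [[a Hv] Hd0].
    destruct (Hk 1%nat ltac:(simpl; lia)) as [_ Hd1].
    destruct (Hv 0%nat ltac:(simpl; lia)) as [V0 VL]. destruct (Hv 1%nat ltac:(simpl; lia)) as [P0 _].
    simpl in V0, VL, P0. specialize (V0 eq_refl). specialize (VL eq_refl). specialize (P0 eq_refl).
    split; [|split; [|split; [|split; [|split]]]].
    + intros x. apply (Hs 0%nat). simpl; lia.
    + intros x. apply (Hs 1%nat). simpl; lia.
    + congruence.
    + congruence.
    + unfold dsum, Csum in Hd1. simpl in Hd1. apply copp0. etransitivity; [|exact Hd1]. cq.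
    + unfold dsum, Csum in Hd0. simpl in Hd0. etransitivity; [|exact Hd0]. cq.
  - intros [S0 [S1 [E0 [EL [D1 D0]]]]]. split.
    + intros e He x. simpl in He. destruct e as [|[|]]; [apply S0|apply S1|lia].
    + intros w Hw. simpl in Hw. destruct w as [|[|]]; [| |lia]; split.
      * exists (fst f 1%nat 0). intros e He. simpl in He. destruct e as [|[|]]; [| |lia]; simpl;
        split; intros Hq; try discriminate; auto.
      * unfold dsum, Csum. simpl. etransitivity; [|exact D0]. cq.
      * exists (fst f 1%nat c). intros e He. simpl in He. destruct e as [|[|]]; [| |lia]; simpl;
        split; intros Hq; try discriminate; auto.
      * unfold dsum, Csum. simpl. rewrite D1. cq.
Qed.

Lemma G1_vv L c f a :
  vertex_value (attach (loop_graph L) 0 c) f 0 a <->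
  (fst f 0%nat 0 = a /\ fst f 0%nat L = a /\ fst f 1%nat 0 = a).
Proof.
  split.
  - intros Hv. destruct (Hv 0%nat ltac:(simpl; lia)) as [V0 VL]. destruct (Hv 1%nat ltac:(simpl; lia)) as [P0 _].
    simpl in V0, VL, P0. auto.
  - intros [V0 [VL P0]] e He. simpl in He. destruct e as [|[|]]; [| |lia]; simpl;
    split; intros Hq; try discriminate; auto.
Qed.

Lemma G2_eig L c z f :
  eigen_sol (attach (interval_graph L) 0 c) z f <->
  (sol z (fst f 0%nat) (snd f 0%nat) /\ sol z (fst f 1%nat) (snd f 1%nat) /\ sol z (fst f 2%nat) (snd f 2%nat) /\
   fst f 0%nat 0 = fst f 2%nat 0 /\ fst f 1%nat 0 = fst f 2%nat 0 /\
   snd f 0%nat (L/2) = RtoC 0 /\ snd f 1%nat (L/2) = RtoC 0 /\ snd f 2%nat c = RtoC 0 /\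
   Cplus (Cplus (snd f 0%nat 0) (snd f 1%nat 0)) (snd f 2%nat 0) = RtoC 0).
Proof.
  split.
  - intros [Hs Hk].
    destruct (Hk 0%nat ltac:(simpl; lia)) as [[a Hv] Hd0].
    destruct (Hk 1%nat ltac:(simpl; lia)) as [_ Hd1].
    destruct (Hk 2%nat ltac:(simpl; lia)) as [_ Hd2].
    destruct (Hk 3%nat ltac:(simpl; lia)) as [_ Hd3].
    destruct (Hv 0%nat ltac:(simpl; lia)) as [V0 _]. destruct (Hv 1%nat ltac:(simpl; lia)) as [V1 _].
    destruct (Hv 2%nat ltac:(simpl; lia)) as [P0 _].
    simpl in V0, V1, P0. specialize (V0 eq_refl). specialize (V1 eq_refl). specialize (P0 eq_refl).
    split; [|split; [|split; [|split; [|split; [|split; [|split; [|split]]]]]]].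
    + intros x. apply (Hs 0%nat). simpl; lia.
    + intros x. apply (Hs 1%nat). simpl; lia.
    + intros x. apply (Hs 2%nat). simpl; lia.
    + congruence.
    + congruence.
    + unfold dsum, Csum in Hd1. simpl in Hd1. apply copp0. etransitivity; [|exact Hd1]. cq.
    + unfold dsum, Csum in Hd2. simpl in Hd2. apply copp0. etransitivity; [|exact Hd2]. cq.
    + unfold dsum, Csum in Hd3. simpl in Hd3. apply copp0. etransitivity; [|exact Hd3]. cq.
    + unfold dsum, Csum in Hd0. simpl in Hd0. etransitivity; [|exact Hd0]. cq.
  - intros [S0 [S1 [S2 [E0 [E1 [D0 [D1 [D2 DK]]]]]]]]. split.
    + intros e He x. simpl in He. destruct e as [|[|[|]]]; [apply S0|apply S1|apply S2|lia].
    + intros w Hw. simpl in Hw. destruct w as [|[|[|[|]]]]; [| | | |lia]; split.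
      * exists (fst f 2%nat 0). intros e He. simpl in He. destruct e as [|[|[|]]]; [| | |lia]; simpl;
        split; intros Hq; try discriminate; auto.
      * unfold dsum, Csum. simpl. etransitivity; [|exact DK]. cq.
      * exists (fst f 0%nat (L/2)). intros e He. simpl in He. destruct e as [|[|[|]]]; [| | |lia]; simpl;
        split; intros Hq; try discriminate; auto.
      * unfold dsum, Csum. simpl. rewrite D0. cq.
      * exists (fst f 1%nat (L/2)). intros e He. simpl in He. destruct e as [|[|[|]]]; [| | |lia]; simpl;
        split; intros Hq; try discriminate; auto.
      * unfold dsum, Csum. simpl. rewrite D1. cq.
      * exists (fst f 2%nat c). intros e He. simpl in He. destruct e as [|[|[|]]]; [| | |lia]; simpl;
        split; intros Hq; try discriminate; auto.
      * unfold dsum, Csum. simpl. rewrite D2. cq.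
Qed.

Lemma G2_vv L c f a :
  vertex_value (attach (interval_graph L) 0 c) f 0 a <->
  (fst f 0%nat 0 = a /\ fst f 1%nat 0 = a /\ fst f 2%nat 0 = a).
Proof.
  split.
  - intros Hv. destruct (Hv 0%nat ltac:(simpl; lia)) as [V0 _]. destruct (Hv 1%nat ltac:(simpl; lia)) as [V1 _].
    destruct (Hv 2%nat ltac:(simpl; lia)) as [P0 _].
    simpl in V0, V1, P0. auto.
  - intros [V0 [V1 P0]] e He. simpl in He. destruct e as [|[|[|]]]; [| | |lia]; simpl;
    split; intros Hq; try discriminate; auto.
Qed.


Lemma part3 L (HL : 0 < L) : forall c : R, 0 < c -> forall k : R,
  eigenfreq_nonvanishing_at (attach (loop_graph L) 0 c) k 0
  <-> eigenfreq_nonvanishing_at (attach (interval_graph L) 0 c) k 0.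
Proof.
  intros c Hc k. unfold eigenfreq_nonvanishing_at. split.
  - intros [f [a [He [Hv Ha]]]].
    destruct (proj1 (G1_eig _ _ _ _) He) as [S0 [S1 [E0 [EL [D1 DK]]]]].
    destruct (proj1 (G1_vv _ _ _ _) Hv) as [V0 [VL P0]].
    destruct (loop_to_int _ L _ _ a S0 V0 VL) as [S' [W0 [DW DD]]].
    set (g := (fun e : nat => if Nat.eqb e 2 then fst f 1%nat else symw L (fst f 0%nat),
               fun e : nat => if Nat.eqb e 2 then snd f 1%nat else symdw L (snd f 0%nat)) : gfun).
    exists g, a. split; [|split; [|exact Ha]].
    + apply (proj2 (G2_eig _ _ _ _)). cbn [fst snd g Nat.eqb].
      refine (conj S' (conj S' (conj S1 (conj _ (conj _ (conj DW (conj DW (conj D1 _)))))))).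
      * congruence.
      * congruence.
      * rewrite DD. exact DK.
    + apply (proj2 (G2_vv _ _ _ _)). cbn [fst snd g Nat.eqb]. auto.
  - intros [g [a [He [Hv Ha]]]].
    destruct (proj1 (G2_eig _ _ _ _) He) as [S0 [S1 [S2 [E0 [E1 [D0 [D1 [D2 DK]]]]]]]].
    destruct (proj1 (G2_vv _ _ _ _) Hv) as [V0 [V1 P0]].
    destruct (int_to_loop _ L _ _ _ _ a S0 S1 V0 V1 D0 D1) as [S [U0 [UL UD]]].
    set (f := (fun e : nat => if Nat.eqb e 1 then fst g 2%nat else avg (fst g 0%nat) (fst g 1%nat),
               fun e : nat => if Nat.eqb e 1 then snd g 2%nat else avg (snd g 0%nat) (snd g 1%nat)) : gfun).
    exists f, a. split; [|split; [|exact Ha]].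
    + apply (proj2 (G1_eig _ _ _ _)). cbn [fst snd f Nat.eqb].
      refine (conj S (conj S2 (conj _ (conj _ (conj D2 _))))).
      * congruence.
      * congruence.
      * rewrite UD. exact DK.
    + apply (proj2 (G1_vv _ _ _ _)). cbn [fst snd f Nat.eqb]. auto.
Qed.


Ltac pyth a b :=
  let Ha := fresh in let Hb := fresh in
  pose proof (sin2_cos2 a) as Ha; pose proof (sin2_cos2 b) as Hb; unfold Rsqr in Ha, Hb;
  let Ea := fresh in let Eb := fresh in
  assert (Ea : sin a * sin a + cos a * cos a - 1 = 0) by lra;
  assert (Eb : sin b * sin b + cos b * cos b - 1 = 0) by lra;
  let go E m := (let h := fresh in pose proof (f_equal (fun t => t * m) E) as h; simpl in h) in
  go Ea (cos b * cos b); go Ea (sin b * sin b); go Ea (sin b * cos b); go Ea (cos a * cos b);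
  go Ea (sin a * sin b); go Ea (cos a * sin b); go Ea (sin a * cos b);
  go Eb (cos a * cos a); go Eb (sin a * sin a); go Eb (sin a * cos a); go Eb (cos a * cos b);
  go Eb (sin a * sin b); go Eb (cos a * sin b); go Eb (sin a * cos b);
  go Ea (sin b * sin b + cos b * cos b - 1).

Lemma Fc_eq c k : Fc c k = Cmult (cexpi (c*k + 2*k))
   ((0:R), 4 * (2 * cos (c*k) * sin (2*k) + cos (2*k) * sin (c*k))).
Proof.
  unfold Fc, cexpi.
  replace (2 * c * k) with (2 * (c*k)) by ring.
  replace (2 * (c + 2) * k) with (2 * (c*k) + 2 * (2*k)) by ring.
  replace (4 * k) with (2 * (2*k)) by ring.
  set (a := c*k). set (b := 2*k).
  rewrite ?cos_plus, ?sin_plus, ?cos_2a, ?sin_2a.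
  pyth a b.
  apply injective_projections; simpl; lra.
Qed.

Lemma cexpi_mul x y : Cmult (cexpi x) (cexpi y) = cexpi (x + y).
Proof. unfold cexpi. rewrite cos_plus, sin_plus. apply injective_projections; simpl; ring. Qed.

Lemma cexpi_zero t r1 r2 : Cmult (cexpi t) (r1, r2) = RtoC 0 <-> (r1 = 0 /\ r2 = 0).
Proof.
  unfold cexpi. split.
  - intros H. injection H; intros H1 H2. pose proof (sin2_cos2 t) as P. unfold Rsqr in *.
    assert (e1 : r1 = cos t * (cos t * r1 - sin t * r2) + sin t * (cos t * r2 + sin t * r1)).
    { transitivity (r1 * (sin t * sin t + cos t * cos t)); [rewrite P; ring | ring]. }
    assert (e2 : r2 = cos t * (cos t * r2 + sin t * r1) - sin t * (cos t * r1 - sin t * r2)).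
    { transitivity (r2 * (sin t * sin t + cos t * cos t)); [rewrite P; ring | ring]. }
    simpl in H1, H2. split; [rewrite e1, H1, H2; ring | rewrite e2, H1, H2; ring].
  - intros [-> ->]. apply injective_projections; simpl; ring.
Qed.

Lemma fac1 k : Cplus (RtoC (-1)) (cexpi (4 * k)) = Cmult (cexpi (2*k)) ((0:R), 2 * sin (2*k)).
Proof.
  unfold cexpi. replace (4*k) with (2*(2*k)) by ring. rewrite (cos_2a (2*k)), (sin_2a (2*k)).
  pose proof (sin2_cos2 (2*k)). unfold Rsqr in *.
  apply injective_projections; simpl; lra.
Qed.
Lemma fac2 k : Cplus (RtoC 1) (cexpi (4 * k)) = Cmult (cexpi (2*k)) (2 * cos (2*k), (0:R)).
Proof.
  unfold cexpi. replace (4*k) with (2*(2*k)) by ring. rewrite (cos_2a (2*k)), (sin_2a (2*k)).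
  pose proof (sin2_cos2 (2*k)). unfold Rsqr in *.
  apply injective_projections; simpl; lra.
Qed.

Lemma sec1 c k : Cmult (Cplus (RtoC (-1)) (cexpi (4 * k))) (Fc c k) = RtoC 0 <->
  sin (2*k) * (2 * cos (c*k) * sin (2*k) + cos (2*k) * sin (c*k)) = 0.
Proof.
  rewrite fac1, Fc_eq.
  set (Y := 2 * cos (c*k) * sin (2*k) + cos (2*k) * sin (c*k)).
  replace (Cmult (Cmult (cexpi (2 * k)) ((0:R), 2 * sin (2 * k))) (Cmult (cexpi (c * k + 2 * k)) ((0:R), 4 * Y)))
    with (Cmult (Cmult (cexpi (2 * k)) (cexpi (c * k + 2 * k))) (- (8 * sin (2*k) * Y), (0:R)))
    by (destruct (cexpi (2*k)), (cexpi (c*k+2*k)); apply injective_projections; simpl; ring).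
  rewrite cexpi_mul, cexpi_zero. split; [intros [H _]; lra | intros H; split; lra].
Qed.

Lemma sec2 c k : Cmult (Cplus (RtoC 1) (cexpi (4 * k))) (Fc c k) = RtoC 0 <->
  cos (2*k) * (2 * cos (c*k) * sin (2*k) + cos (2*k) * sin (c*k)) = 0.
Proof.
  rewrite fac2, Fc_eq.
  set (Y := 2 * cos (c*k) * sin (2*k) + cos (2*k) * sin (c*k)).
  replace (Cmult (Cmult (cexpi (2 * k)) (2 * cos (2 * k), (0:R))) (Cmult (cexpi (c * k + 2 * k)) ((0:R), 4 * Y)))
    with (Cmult (Cmult (cexpi (2 * k)) (cexpi (c * k + 2 * k))) ((0:R), 8 * cos (2*k) * Y))
    by (destruct (cexpi (2*k)), (cexpi (c*k+2*k)); apply injective_projections; simpl; ring).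
  rewrite cexpi_mul, cexpi_zero. split; [intros [_ H]; lra | intros H; split; lra].
Qed.


Lemma rep0 k x1 u du : k <> 0 -> sol (RtoC (k * k)) u du -> du x1 = RtoC 0 ->
  forall x, u x = (fst (u x1) * cos (k * (x - x1)), snd (u x1) * cos (k * (x - x1))) /\
            du x = (fst (u x1) * (- k * sin (k * (x - x1))), snd (u x1) * (- k * sin (k * (x - x1)))).
Proof.
  intros Hk Hs H0 x. destruct (rep k x1 u du Hk Hs x) as [R1 R2].
  rewrite H0 in R1, R2. rewrite cs_eval in R1. rewrite dcs_eval in R2. rewrite R1, R2.
  split; apply injective_projections; simpl; ring.
Qed.

Lemma sysI k C2 S2 Cc Sc b0 b1 al : k <> 0 -> C2 <> 0 -> 2 * Cc * S2 + C2 * Sc <> 0 ->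
  b0 * C2 = al * Cc -> b1 * C2 = al * Cc ->
  b0 * (- k * - S2) + b1 * (- k * - S2) + al * (- k * - Sc) = 0 ->
  b0 = 0 /\ b1 = 0 /\ al = 0.
Proof.
  intros Hk HC HY E0 E1 D.
  assert (D' : S2 * (b0 + b1) + al * Sc = 0).
  { apply (Rmult_eq_reg_l k); [|auto]. rewrite Rmult_0_r. rewrite <- D. ring. }
  assert (al * (2 * Cc * S2 + C2 * Sc) = 0).
  { transitivity (C2 * (S2 * (b0 + b1) + al * Sc) - S2 * (b0 * C2 - al * Cc) - S2 * (b1 * C2 - al * Cc)).
    - ring.
    - rewrite D', E0, E1. ring. }
  assert (Ha : al = 0).
  { destruct (Rmult_integral _ _ H); auto. contradiction. }
  subst al. rewrite Rmult_0_l in E0, E1.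
  split; [|split; auto].
  - destruct (Rmult_integral _ _ E0); auto. contradiction.
  - destruct (Rmult_integral _ _ E1); auto. contradiction.
Qed.

Lemma ang1 k : k * (0 - 4 / 2) = - (2 * k). Proof. field. Qed.
Lemma ang2 k c : k * (0 - c) = - (c * k). Proof. ring. Qed.



Lemma dcs0 x1 A B x : dcs 0 x1 A B x = RtoC 0.
Proof. rewrite dcs_eval. apply injective_projections; simpl; ring. Qed.
Lemma cs0 x1 A x : cs 0 x1 A (RtoC 0) x = A.
Proof. rewrite cs_eval, Rmult_0_l, cos_0. destruct A; apply injective_projections; simpl; ring. Qed.

Lemma eig2 c (Hc : 0 < c) k : eigenfreq (attach (interval_graph 4) 0 c) k <->
  cos (2*k) * (2 * cos (c*k) * sin (2*k) + cos (2*k) * sin (c*k)) = 0.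
Proof.
  destruct (Req_dec k 0) as [Hk0|Hk].
  - subst k. split; intros _.
    + rewrite !Rmult_0_r, sin_0. ring.
    + exists (fun _ => cs 0 0 (RtoC 1) (RtoC 0), fun _ => dcs 0 0 (RtoC 1) (RtoC 0)). split.
      * apply (proj2 (G2_eig _ _ _ _)). cbn [fst snd]. rewrite !dcs0.
        refine (conj (sol_cs _ _ _ _) (conj (sol_cs _ _ _ _) (conj (sol_cs _ _ _ _) (conj eq_refl (conj eq_refl (conj eq_refl (conj eq_refl (conj eq_refl _)))))))).
        cq.
      * intros Hz. specialize (Hz 0%nat ltac:(simpl; lia) 0 ltac:(simpl; lra)).
        simpl in Hz. rewrite cs0 in Hz. injection Hz; intros; lra.
  - set (C2 := cos (2*k)). set (S2 := sin (2*k)). set (Cc := cos (c*k)). set (Sc := sin (c*k)).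
    split.
    + intros [f [He Hnz]]. destruct (Req_dec (C2 * (2 * Cc * S2 + C2 * Sc)) 0) as [|HY]; auto.
      exfalso. apply Hnz.
      assert (HC : C2 <> 0) by (intro; apply HY; rewrite H; ring).
      assert (HY' : 2 * Cc * S2 + C2 * Sc <> 0) by (intro; apply HY; rewrite H; ring).
      destruct (proj1 (G2_eig _ _ _ _) He) as [S0 [S1 [S2' [E0 [E1 [D0 [D1 [D2 DK]]]]]]]].
      pose proof (rep0 k (4/2) _ _ Hk S0 D0) as R0.
      pose proof (rep0 k (4/2) _ _ Hk S1 D1) as R1.
      pose proof (rep0 k c _ _ Hk S2' D2) as Rp.
      rewrite (proj1 (R0 0)), (proj1 (Rp 0)) in E0.
      rewrite (proj1 (R1 0)), (proj1 (Rp 0)) in E1.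
      rewrite (proj2 (R0 0)), (proj2 (R1 0)), (proj2 (Rp 0)) in DK.
      rewrite ang1, ang2, !cos_neg in E0. rewrite ang1, ang2, !cos_neg in E1.
      rewrite ang1, ang2, !sin_neg in DK. fold C2 S2 Cc Sc in E0, E1, DK.
      remember (fst f 0%nat (4/2)) as B0. remember (fst f 1%nat (4/2)) as B1. remember (fst f 2%nat c) as Al.
      destruct B0 as [b0r b0i], B1 as [b1r b1i], Al as [ar ai]. simpl in E0, E1, DK.
      injection E0; intros E0i E0r. injection E1; intros E1i E1r. injection DK; intros DKi DKr.
      destruct (sysI k C2 S2 Cc Sc b0r b1r ar Hk HC HY' E0r E1r ltac:(rewrite <- DKr; ring)) as [z1 [z2 z3]].
      destruct (sysI k C2 S2 Cc Sc b0i b1i ai Hk HC HY' E0i E1i ltac:(rewrite <- DKi; ring)) as [z4 [z5 z6]].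
      subst.
      intros e Hel x _. simpl in Hel. destruct e as [|[|[|]]]; [| | |lia].
      * rewrite (proj1 (R0 x)). cq.
      * rewrite (proj1 (R1 x)). cq.
      * rewrite (proj1 (Rp x)). cq.
    + intros H. destruct (Req_dec C2 0) as [HC|HC].
      * exists (fun e => if Nat.eqb e 0 then cs k (4/2) (RtoC 1) (RtoC 0) else if Nat.eqb e 1 then cs k (4/2) (RtoC (-1)) (RtoC 0) else cs k c (RtoC 0) (RtoC 0),
                fun e => if Nat.eqb e 0 then dcs k (4/2) (RtoC 1) (RtoC 0) else if Nat.eqb e 1 then dcs k (4/2) (RtoC (-1)) (RtoC 0) else dcs k c (RtoC 0) (RtoC 0)).
        split.
        -- apply (proj2 (G2_eig _ _ _ _)). cbn [fst snd Nat.eqb].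
           refine (conj (sol_cs _ _ _ _) (conj (sol_cs _ _ _ _) (conj (sol_cs _ _ _ _) _))).
           rewrite !cs_eval, !dcs_eval, !Rminus_eq_0, ang1, ang2, !Rmult_0_r, ?cos_neg, ?sin_neg, sin_0, cos_0.
           fold C2 S2 Cc Sc. rewrite HC.
           repeat split; cq.
        -- intros Hz. specialize (Hz 0%nat ltac:(simpl; lia) (4/2) ltac:(simpl; lra)).
           simpl in Hz. rewrite cs_eval, Rminus_eq_0, Rmult_0_r, cos_0, sin_0 in Hz.
           injection Hz; intros; lra.
      * assert (HY : 2 * Cc * S2 + C2 * Sc = 0).
        { destruct (Rmult_integral _ _ H); [contradiction|auto]. }
        exists (fun e => if Nat.eqb e 2 then cs k c (RtoC C2) (RtoC 0) else cs k (4/2) (RtoC Cc) (RtoC 0),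
                fun e => if Nat.eqb e 2 then dcs k c (RtoC C2) (RtoC 0) else dcs k (4/2) (RtoC Cc) (RtoC 0)).
        split.
        -- apply (proj2 (G2_eig _ _ _ _)). cbn [fst snd Nat.eqb].
           refine (conj (sol_cs _ _ _ _) (conj (sol_cs _ _ _ _) (conj (sol_cs _ _ _ _) _))).
           rewrite !cs_eval, !dcs_eval, !Rminus_eq_0, ang1, ang2, !Rmult_0_r, ?cos_neg, ?sin_neg, sin_0, cos_0.
           fold C2 S2 Cc Sc.
           split; [cq|split; [cq|split; [cq|split; [cq|split; [cq|]]]]].
           apply injective_projections; simpl; [|ring].
           transitivity (k * (2 * Cc * S2 + C2 * Sc)); [ring|rewrite HY; ring].
        -- intros Hz. specialize (Hz 2%nat ltac:(simpl; lia) c ltac:(simpl; lra)).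
           simpl in Hz. rewrite cs_eval, Rminus_eq_0, Rmult_0_r, cos_0, sin_0 in Hz.
           injection Hz; intros; apply HC; lra.
Qed.


Lemma sysL k C2 S2 Cc Sc A B al : k <> 0 -> C2*C2 + S2*S2 = 1 -> S2 <> 0 ->
  2 * Cc * S2 + C2 * Sc <> 0 ->
  A = al * Cc -> A * (C2*C2 - S2*S2) + B * (2*S2*C2) = al * Cc ->
  k * (B - (- A * (2*S2*C2) + B * (C2*C2 - S2*S2)) + al * Sc) = 0 ->
  A = 0 /\ B = 0 /\ al = 0.
Proof.
  intros Hk P HS HY e1 e2 e3.
  assert (h1 : 2 * S2 * (C2 * B - S2 * A) = 0).
  { transitivity ((A * (C2*C2 - S2*S2) + B * (2*S2*C2)) - A * (C2*C2 + S2*S2)); [ring|].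
    rewrite e2, P, <- e1. ring. }
  assert (hB : C2 * B - S2 * A = 0).
  { destruct (Rmult_integral _ _ h1) as [h|h]; auto. exfalso. apply HS. lra. }
  assert (h2 : B * (1 - (C2*C2 - S2*S2)) + A * (2*S2*C2) + al * Sc = 0).
  { apply (Rmult_eq_reg_l k); [|auto]. rewrite Rmult_0_r, <- e3. ring. }
  assert (h3 : 2 * B + al * Sc = 0).
  { assert (S2 * (2 * B + al * Sc) = 0).
    { transitivity (S2 * (B * (1 - (C2*C2 - S2*S2)) + A * (2*S2*C2) + al * Sc) + S2 * B * (1 - (C2*C2 + S2*S2))
         + 2 * S2 * C2 * (C2 * B - S2 * A)); [ring|].
      rewrite h2, P, hB. ring. }
    destruct (Rmult_integral _ _ H) as [h|h]; auto. contradiction. }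
  assert (h4 : al * (2 * Cc * S2 + C2 * Sc) = 0).
  { transitivity (2 * S2 * (al * Cc - A) + C2 * (2 * B + al * Sc) - 2 * (C2 * B - S2 * A)); [ring|].
    rewrite h3, hB, <- e1. ring. }
  assert (ha : al = 0).
  { destruct (Rmult_integral _ _ h4) as [h|h]; auto. contradiction. }
  subst al. split; [|split]; [rewrite e1; ring | lra | auto].
Qed.

Lemma ang3 k : k * (4 - 0) = 2 * (2 * k). Proof. ring. Qed.
Lemma ang0 k : k * (0 - 0) = 0. Proof. ring. Qed.

Lemma IZR_abs1 n : IZR n <> 0 -> 1 <= Rabs (IZR n).
Proof.
  intros H. rewrite Rabs_Zabs. apply IZR_le.
  assert (n <> 0%Z) by (intro; subst; apply H; reflexivity). lia.
Qed.

Lemma sin_wit k : k <> 0 -> sin (2 * k) = 0 -> exists x, 0 <= x <= 4 /\ sin (k * x) <> 0.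
Proof.
  intros Hk HS. destruct (sin_eq_0_0 _ HS) as [n Hn].
  assert (HI : IZR n <> 0) by (intro Hz; rewrite Hz in Hn; lra).
  pose proof (IZR_abs1 n HI) as H1.
  assert (Hka : PI <= 2 * Rabs k).
  { replace (2 * Rabs k) with (Rabs (2 * k)) by (rewrite Rabs_mult, Rabs_pos_eq; lra).
    rewrite Hn, Rabs_mult, (Rabs_pos_eq PI) by (pose proof PI_RGT_0; lra).
    pose proof PI_RGT_0. nra. }
  assert (Hpos : 0 < Rabs k) by (apply Rabs_pos_lt; auto).
  exists (PI / (2 * Rabs k)). split.
  - pose proof PI_RGT_0. split.
    + apply Rlt_le, Rdiv_lt_0_compat; lra.
    + apply (Rmult_le_reg_r (2 * Rabs k)); [lra|]. unfold Rdiv. rewrite Rmult_assoc, Rinv_l by lra. nra.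
  - destruct (Rcase_abs k) as [Hn0|Hp0].
    + rewrite Rabs_left by auto. replace (k * (PI / (2 * - k))) with (- (PI / 2)) by (field; lra).
      rewrite sin_neg, sin_PI2. lra.
    + rewrite Rabs_pos_eq by lra. replace (k * (PI / (2 * k))) with (PI / 2) by (field; lra).
      rewrite sin_PI2. lra.
Qed.

Lemma eig1 c (Hc : 0 < c) k : eigenfreq (attach (loop_graph 4) 0 c) k <->
  sin (2*k) * (2 * cos (c*k) * sin (2*k) + cos (2*k) * sin (c*k)) = 0.
Proof.
  destruct (Req_dec k 0) as [Hk0|Hk].
  - subst k. split; intros _.
    + rewrite !Rmult_0_r, sin_0. ring.
    + exists (fun _ => cs 0 0 (RtoC 1) (RtoC 0), fun _ => dcs 0 0 (RtoC 1) (RtoC 0)). split.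
      * apply (proj2 (G1_eig _ _ _ _)). cbn [fst snd]. rewrite !dcs0, !cs0.
        refine (conj (sol_cs _ _ _ _) (conj (sol_cs _ _ _ _) (conj eq_refl (conj eq_refl (conj eq_refl _))))).
        cq.
      * intros Hz. specialize (Hz 0%nat ltac:(simpl; lia) 0 ltac:(simpl; lra)).
        simpl in Hz. rewrite cs0 in Hz. injection Hz; intros; lra.
  - set (C2 := cos (2*k)). set (S2 := sin (2*k)). set (Cc := cos (c*k)). set (Sc := sin (c*k)).
    assert (P : C2 * C2 + S2 * S2 = 1).
    { pose proof (sin2_cos2 (2*k)) as Q. unfold Rsqr in Q. fold C2 S2 in Q. lra. }
    split.
    + intros [f [He Hnz]]. destruct (Req_dec (S2 * (2 * Cc * S2 + C2 * Sc)) 0) as [|HY]; auto.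
      exfalso. apply Hnz.
      assert (HS : S2 <> 0) by (intro H; apply HY; rewrite H; ring).
      assert (HY' : 2 * Cc * S2 + C2 * Sc <> 0) by (intro H; apply HY; rewrite H; ring).
      destruct (proj1 (G1_eig _ _ _ _) He) as [S0 [S1 [E0 [EL [D1 DK]]]]].
      pose proof (rep k 0 _ _ Hk S0) as R.
      pose proof (rep0 k c _ _ Hk S1 D1) as Rp.
      remember (fst f 0%nat 0) as A0. remember (Cmult (snd f 0%nat 0) (RtoC (/ k))) as Bc.
      remember (fst f 1%nat c) as Al.
      rewrite (proj1 (Rp 0)) in E0.
      rewrite (proj1 (R 4)), (proj1 (Rp 0)) in EL.
      rewrite (proj2 (R 0)), (proj2 (R 4)), (proj2 (Rp 0)) in DK.
      rewrite cs_eval in EL. rewrite !dcs_eval in DK.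
      rewrite ang2, cos_neg in E0.
      rewrite ang3, ang2, cos_neg, (cos_2a (2*k)), (sin_2a (2*k)) in EL.
      rewrite ang0, ang3, ang2, sin_neg, (cos_2a (2*k)), (sin_2a (2*k)), sin_0, cos_0 in DK.
      fold C2 S2 Cc Sc in E0, EL, DK.
      destruct A0 as [ar ai], Bc as [br bi], Al as [lr li]. simpl in E0, EL, DK.
      injection E0; intros E0i E0r. injection EL; intros ELi ELr. injection DK; intros DKi DKr.
      destruct (sysL k C2 S2 Cc Sc ar br lr Hk P HS HY' E0r ELr ltac:(rewrite <- DKr; ring)) as [z1 [z2 z3]].
      destruct (sysL k C2 S2 Cc Sc ai bi li Hk P HS HY' E0i ELi ltac:(rewrite <- DKi; ring)) as [z4 [z5 z6]].
      subst.
      intros e Hel x _. simpl in Hel. destruct e as [|[|]]; [| |lia].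
      * rewrite (proj1 (R x)), cs_eval. cq.
      * rewrite (proj1 (Rp x)). cq.
    + intros H. destruct (Req_dec S2 0) as [HS|HS].
      * exists (fun e => if Nat.eqb e 0 then cs k 0 (RtoC 0) (RtoC 1) else cs k c (RtoC 0) (RtoC 0),
                fun e => if Nat.eqb e 0 then dcs k 0 (RtoC 0) (RtoC 1) else dcs k c (RtoC 0) (RtoC 0)).
        split.
        -- apply (proj2 (G1_eig _ _ _ _)). cbn [fst snd Nat.eqb].
           refine (conj (sol_cs _ _ _ _) (conj (sol_cs _ _ _ _) _)).
           rewrite ?cs_eval, ?dcs_eval, ?ang3, ?ang2, ?Rminus_eq_0, ?Rmult_0_r, ?Rmult_0_l, ?cos_neg, ?sin_neg, ?sin_0, ?cos_0,
             ?(cos_2a (2*k)), ?(sin_2a (2*k)).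
           fold C2 S2 Cc Sc. rewrite HS.
           assert (HC2 : C2 * C2 = 1) by (rewrite HS in P; lra).
           split. { apply injective_projections; simpl. ring. ring. } split; [cq|split; [cq|]].
           apply injective_projections; simpl; [|ring].
           transitivity (k * (1 - C2 * C2)); [ring|rewrite HC2; ring].
        -- intros Hz. destruct (sin_wit k Hk HS) as [x [Hx Hsx]].
           specialize (Hz 0%nat ltac:(simpl; lia) x ltac:(simpl; lra)).
           simpl in Hz. rewrite cs_eval, Rminus_0_r in Hz.
           injection Hz; intros; apply Hsx; lra.
      * assert (HY : 2 * Cc * S2 + C2 * Sc = 0).
        { destruct (Rmult_integral _ _ H); [contradiction|auto]. }
        exists (fun e => if Nat.eqb e 0 then cs k 0 (RtoC (- Sc * C2)) (RtoC (- Sc * S2)) else cs k c (RtoC (2 * S2)) (RtoC 0),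
                fun e => if Nat.eqb e 0 then dcs k 0 (RtoC (- Sc * C2)) (RtoC (- Sc * S2)) else dcs k c (RtoC (2 * S2)) (RtoC 0)).
        split.
        -- apply (proj2 (G1_eig _ _ _ _)). cbn [fst snd Nat.eqb].
           refine (conj (sol_cs _ _ _ _) (conj (sol_cs _ _ _ _) _)).
           rewrite ?cs_eval, ?dcs_eval, ?ang3, ?ang2, ?Rminus_eq_0, ?Rmult_0_r, ?Rmult_0_l, ?cos_neg, ?sin_neg, ?sin_0, ?cos_0,
             ?(cos_2a (2*k)), ?(sin_2a (2*k)).
           fold C2 S2 Cc Sc.
           pose proof (f_equal (fun t => t * (Sc * C2)) P) as P1.
           pose proof (f_equal (fun t => t * (k * Sc * S2)) P) as P2. simpl in P1, P2.
           split; [|split; [|split]]; apply injective_projections; simpl; try ring; nra.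
        -- intros Hz. specialize (Hz 1%nat ltac:(simpl; lia) c ltac:(simpl; lra)).
           simpl in Hz. rewrite cs_eval, Rminus_eq_0, Rmult_0_r, cos_0, sin_0 in Hz.
           injection Hz; intros; apply HS; lra.
Qed.


Theorem mainTheorem8 (L : R) (HL : (0 < L)%R) :
  (forall k m : C, Mfun (loop_graph L) 0 k m <-> Mfun (interval_graph L) 0 k m)
  /\ ~ isospectral (loop_graph L) (interval_graph L)
  /\ (forall c : R, (0 < c)%R -> forall k : R,
        eigenfreq_nonvanishing_at (attach (loop_graph L) 0 c) k 0
        <-> eigenfreq_nonvanishing_at (attach (interval_graph L) 0 c) k 0)
  /\ (forall c : R, (0 < c)%R -> forall k : R,
        (eigenfreq (attach (loop_graph 4) 0 c) k
           <-> Cmult (Cplus (RtoC (-1)) (cexpi (4 * k))) (Fc c k) = RtoC 0)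
        /\ (eigenfreq (attach (interval_graph 4) 0 c) k
           <-> Cmult (Cplus (RtoC 1) (cexpi (4 * k))) (Fc c k) = RtoC 0)).
Proof.
  split; [exact (part1 L HL)|].
  split; [exact (part2 L HL)|].
  split; [exact (part3 L HL)|].
  intros c Hc k. split.
  - rewrite sec1. apply eig1; auto.
  - rewrite sec2. apply eig2; auto.
Qed.
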